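(* Let $Q=(I,\Omega)$ be a quiver, $\theta\in\mathbb{Z}^I$, $\alpha\in\mathbb{N}^I$, and $d^*=(d^1,\dots,d^s)$ a tuple of nonzero vectors in $\mathbb{N}^I$ with $d^1+\cdots+d^s=\alpha$. Let $F^*$ be a flag of type $d^*$ in $\bigoplus_{i\in I}\mathbb{C}^{\alpha_i}$, and let $\varphi:\mathrm{Rep}(Q,\alpha)_{F^*}\to\prod_{k=1}^s\mathrm{Rep}(Q,d^k)$ and $\mathrm{Rep}(Q,\alpha)^{ss}_{F^*}=\varphi^{-1}\bigl(\prod_{k=1}^s\mathrm{Rep}(Q,d^k)^{ss}\bigr)$ be as in the context. If $\mathrm{Rep}(Q,\alpha)^{ss}_{F^*}$ is nonempty, then $\dim \mathrm{Rep}(Q,\alpha)^{ss}_{F^*}=\dim\mathrm{Rep}(Q,\alpha)_{F^*}$.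
   Context: $\mathrm{Rep}(Q,\beta)$ is the vector space of complex representations of $Q$ with dimension vector $\beta$. A flag of type $d^*$ is a chain $0=F^0\subset F^1\subset\cdots\subset F^s=\bigoplus_i\mathbb{C}^{\alpha_i}$ of $I$-graded subspaces with $\dim_{I} F^k/F^{k-1}=d^k$. $\mathrm{Rep}(Q,\alpha)_{F^*}$ is the subspace of representations $x$ with $x_h(F^k_i)\subseteq F^k_j$ for every arrow $h:i\to j$ and every $k$. The map $\varphi$ sends $x$ to the tuple of representations induced on the subquotients $F^k/F^{k-1}$ (each identified with $\bigoplus_i\mathbb{C}^{d^k_i}$ by fixed choices of bases). The slope of a nonzero representation $V$ with dimension vector $\beta$ is $\mu(V)=\bigl(\sum_i\theta_i\beta_i\bigr)/\bigl(\sum_i\beta_i\bigr)$; $V$ is semistable if $\mu(U)\leq\mu(V)$ for every nonzero subrepresentation $U$ of $V$, and $\mathrm{Rep}(Q,\beta)^{ss}$ is the set of semistable representations. *)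

(* Defs.v *)
From HB Require Import structures.
From mathcomp Require Import all_boot all_order all_algebra.
From mathcomp Require Import complex Rstruct.
From mathcomp Require Import mpoly.
From Stdlib Require Reals.

Set Implicit Arguments.
Unset Strict Implicit.
Unset Printing Implicit Defensive.

Import Order.TTheory GRing.Theory Num.Theory.
Local Open Scope ring_scope.

Definition CC : fieldType := complex Rdefinitions.R.

Section Quiver.
Variables (I Omega : finType) (src tgt : Omega -> I).

(* Rep(Q, beta): for each arrow h : i -> j a linear map C^{beta_i} -> C^{beta_j},
   written as a matrix acting on row vectors (v |-> v *m x h). *)
Definition rep (beta : I -> nat) : Type :=
  forall h : Omega, 'M[CC]_(beta (src h), beta (tgt h)).

Definition slope (theta : I -> int) (beta : I -> nat) : rat :=
  ((\sum_(i : I) theta i * (beta i)%:Z)%:~R) / ((\sum_(i : I) beta i)%N)%:R.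

(* U = (U_i)_i (row spaces of the matrices U i) is a subrepresentation of x *)
Definition is_subrep (beta : I -> nat) (x : rep beta)
  (U : forall i : I, 'M[CC]_(beta i)) : Prop :=
  forall h : Omega, (U (src h) *m x h <= U (tgt h))%MS.

Definition semistable (theta : I -> int) (beta : I -> nat) (x : rep beta) : Prop :=
  forall U : forall i : I, 'M[CC]_(beta i),
    is_subrep x U -> (exists i, U i != 0) ->
    slope theta (fun i => \rank (U i)) <= slope theta beta.

(* F : nat -> (I-graded subspaces of (+)_i C^{alpha_i}), F k i given by the row
   space of a square matrix, is a flag of type d^* = (d 0, ..., d (s-1)). *)
Definition is_flag (alpha : I -> nat) (s : nat) (d : nat -> I -> nat)
  (F : nat -> forall i : I, 'M[CC]_(alpha i)) : Prop :=
  [/\ forall i, F 0%N i = 0,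
      forall i, row_full (F s i),
      forall k i, (k < s)%N -> (F k i <= F k.+1 i)%MS
    & forall k i, (k < s)%N -> \rank (F k.+1 i) = (\rank (F k i) + d k i)%N].

(* Fixed bases: the rows of B k i project to a basis of F^{k+1}_i / F^k_i. *)
Definition is_quot_basis (alpha : I -> nat) (s : nat) (d : nat -> I -> nat)
  (F : nat -> forall i : I, 'M[CC]_(alpha i))
  (B : forall (k : nat) (i : I), 'M[CC]_(d k i, alpha i)) : Prop :=
  forall k i, (k < s)%N ->
    (B k i <= F k.+1 i)%MS /\ (F k.+1 i <= F k i + B k i)%MS.

Definition rep_flag (alpha : I -> nat) (s : nat)
  (F : nat -> forall i : I, 'M[CC]_(alpha i)) (x : rep alpha) : Prop :=
  forall k h, (k <= s)%N -> (F k (src h) *m x h <= F k (tgt h))%MS.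

(* y is the representation induced by x on F^{k+1}/F^k, in the bases B k. *)
Definition induced (alpha : I -> nat) (d : nat -> I -> nat)
  (F : nat -> forall i : I, 'M[CC]_(alpha i))
  (B : forall (k : nat) (i : I), 'M[CC]_(d k i, alpha i))
  (x : rep alpha) (k : nat) (y : rep (d k)) : Prop :=
  forall h, (B k (src h) *m x h - y h *m B k (tgt h) <= F k (tgt h))%MS.

Definition rep_flag_ss (theta : I -> int) (alpha : I -> nat) (s : nat)
  (d : nat -> I -> nat) (F : nat -> forall i : I, 'M[CC]_(alpha i))
  (B : forall (k : nat) (i : I), 'M[CC]_(d k i, alpha i)) (x : rep alpha) : Prop :=
  rep_flag s F x /\
  forall k, (k < s)%N ->
    exists y : rep (d k), induced F B x y /\ semistable theta y.

Definition coord (alpha : I -> nat) : finType :=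
  {h : Omega & ('I_(alpha (src h)) * 'I_(alpha (tgt h)))%type}.

Definition ncoord (alpha : I -> nat) : nat := #|coord alpha|.

Definition coords (alpha : I -> nat) (x : rep alpha) : 'I_(ncoord alpha) -> CC :=
  fun v => let c := @enum_val (coord alpha) (coord alpha) v
           in x (tag c) (tagged c).1 (tagged c).2.

Definition alg_indep (alpha : I -> nat) (S : rep alpha -> Prop)
  (J : {set 'I_(ncoord alpha)}) : Prop :=
  forall p : {mpoly CC[ncoord alpha]},
    (forall m, m \in msupp p -> forall v, v \notin J -> m v = 0%N) ->
    (forall x, S x -> p.@[coords x] = 0) ->
    p = 0.

(* dim S = n : the (Krull) dimension of the Zariski closure of S, i.e. the
   transcendence degree of its coordinate ring, i.e. the maximal number of
   algebraically independent coordinate functions on S. *)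
Definition is_dim (alpha : I -> nat) (S : rep alpha -> Prop) (n : nat) : Prop :=
  (exists J, alg_indep S J /\ #|J| = n) /\
  (forall J, alg_indep S J -> (#|J| <= n)%N).

End Quiver.

(* Main.v *)
Require Import Defs.
From HB Require Import structures.
From mathcomp Require Import all_boot all_order all_algebra.
From mathcomp Require Import complex Rstruct mpoly.
From mathcomp Require Import all_classical all_reals.
From mathcomp Require Import topology normedtype sequences.
From mathcomp Require Import ring lra spectral.
Set Implicit Arguments.
Unset Strict Implicit.
Unset Printing Implicit Defensive.
Import Order.TTheory GRing.Theory Num.Theory.
Import numFieldTopology.Exports numFieldNormedType.Exports.
Local Open Scope classical_set_scope.
Local Open Scope ring_scope.
Local Open Scope sesquilinear_scope.

Section Gen.
Variable RR : realType.
Local Notation CC := (complex RR).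
Local Notation Rp := (@complex.Re RR).
Local Notation Ip := (@complex.Im RR).

Lemma ReD (x y : CC) : Rp (x + y) = Rp x + Rp y. Proof. by case: x; case: y. Qed.
Lemma ImD (x y : CC) : Ip (x + y) = Ip x + Ip y. Proof. by case: x; case: y. Qed.
Lemma ReM (x y : CC) : Rp (x * y) = Rp x * Rp y - Ip x * Ip y. Proof. by case: x; case: y. Qed.
Lemma ImM (x y : CC) : Ip (x * y) = Rp x * Ip y + Ip x * Rp y. Proof. by case: x; case: y. Qed.
Lemma ReN (x : CC) : Rp (- x) = - Rp x. Proof. by case: x. Qed.
Lemma ImN (x : CC) : Ip (- x) = - Ip x. Proof. by case: x. Qed.

Lemma conjCE (x : CC) : x^* = conjc x.
Proof.
rewrite {1}[x]Crect rmorphD rmorphM /= conjCi !conj_Creal ?Creal_Re ?Creal_Im //.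
rewrite -complexRe -complexIm -complexiE.
by case: x => a b /=; simpc.
Qed.

Definition ccvg (u : nat -> CC) (c : CC) : Prop :=
  (fun n => Rp (u n)) @ \oo --> Rp c /\ (fun n => Ip (u n)) @ \oo --> Ip c.

Lemma ccvg_cst (c : CC) : ccvg (fun _ => c) c.
Proof. by split; apply: cvg_cst. Qed.

Lemma ccvgD u v a b : ccvg u a -> ccvg v b -> ccvg (fun n => u n + v n) (a + b).
Proof.
move=> [ha1 ha2] [hb1 hb2]; split.
  rewrite ReD; have -> : (fun n => Rp (u n + v n)) = (fun n => Rp (u n) + Rp (v n)).
    by apply: funext => n; rewrite ReD.
  exact: (cvgD ha1 hb1).
rewrite ImD; have -> : (fun n => Ip (u n + v n)) = (fun n => Ip (u n) + Ip (v n)).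
  by apply: funext => n; rewrite ImD.
exact: (cvgD ha2 hb2).
Qed.

Lemma ccvgM u v a b : ccvg u a -> ccvg v b -> ccvg (fun n => u n * v n) (a * b).
Proof.
move=> [ha1 ha2] [hb1 hb2]; split.
  rewrite ReM; have -> : (fun n => Rp (u n * v n)) = (fun n => Rp (u n) * Rp (v n) - Ip (u n) * Ip (v n)).
    by apply: funext => n; rewrite ReM.
  exact: (cvgB (cvgM ha1 hb1) (cvgM ha2 hb2)).
rewrite ImM; have -> : (fun n => Ip (u n * v n)) = (fun n => Rp (u n) * Ip (v n) + Ip (u n) * Rp (v n)).
  by apply: funext => n; rewrite ImM.
exact: (cvgD (cvgM ha1 hb2) (cvgM ha2 hb1)).
Qed.

Lemma ccvgN u a : ccvg u a -> ccvg (fun n => - u n) (- a).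
Proof.
move=> [ha1 ha2]; split.
  rewrite ReN; have -> : (fun n => Rp (- u n)) = (fun n => - Rp (u n)).
    by apply: funext => n; rewrite ReN.
  exact: (cvgN ha1).
rewrite ImN; have -> : (fun n => Ip (- u n)) = (fun n => - Ip (u n)).
  by apply: funext => n; rewrite ImN.
exact: (cvgN ha2).
Qed.

Lemma ccvg_conj u a : ccvg u a -> ccvg (fun n => (u n)^*) a^*.
Proof.
move=> [ha1 ha2]; split.
  rewrite conjCE; have -> : (fun n => Rp ((u n)^*)) = (fun n => Rp (u n)).
    by apply: funext => n; rewrite conjCE; case: (u n).
  by case: a ha1 ha2.
rewrite conjCE; have -> : (fun n => Ip ((u n)^*)) = (fun n => - Ip (u n)).
  by apply: funext => n; rewrite conjCE; case: (u n).
by case: a ha1 ha2 => a1 a2 /= _ h; exact: (cvgN h).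
Qed.

Lemma ccvg_sum (I : Type) (r : seq I) (F : nat -> I -> CC) (L : I -> CC) :
  (forall i, ccvg (fun n => F n i) (L i)) ->
  ccvg (fun n => \sum_(i <- r) F n i) (\sum_(i <- r) L i).
Proof.
move=> h; elim: r => [|i r IH].
  rewrite big_nil; have -> : (fun n => \sum_(i <- [::]) F n i) = (fun _ => 0).
    by apply: funext => n; rewrite big_nil.
  exact: ccvg_cst.
rewrite big_cons; have -> : (fun n => \sum_(j <- i :: r) F n j) = (fun n => F n i + \sum_(j <- r) F n j).
  by apply: funext => n; rewrite big_cons.
exact: (ccvgD (h i) IH).
Qed.

Lemma ccvg_unique u a b : ccvg u a -> ccvg u b -> a = b.
Proof.
move=> [h1 h2] [h3 h4].
have e1 : Rp a = Rp b by rewrite -(cvg_lim _ h1) // (cvg_lim _ h3).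
have e2 : Ip a = Ip b by rewrite -(cvg_lim _ h2) // (cvg_lim _ h4).
by case: a b e1 e2 {h1 h2 h3 h4} => a1 a2 [b1 b2] /= -> ->.
Qed.

Lemma incr_ge (f : nat -> nat) : increasing_seq f -> forall n, (n <= f n)%N.
Proof.
move=> hf; have hlt : forall n, (f n < f n.+1)%N.
  by move=> n; change (f n < f n.+1)%O; rewrite (leW_mono hf) ltEnat /=.
elim=> // n IH; exact: leq_ltn_trans IH (hlt n).
Qed.

Lemma cvg_subseqR (u : nat -> RR) (l : RR) (f : nat -> nat) :
  increasing_seq f -> u @ \oo --> l -> (u \o f) @ \oo --> l.
Proof.
move=> hf hu; apply: cvg_comp hu.
move=> A [N _ HN]; exists N => // n /= hn; apply: HN.
exact: leq_trans hn (incr_ge hf n).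
Qed.

Lemma bw_fam (J : eqType) (l : seq J) (v : J -> nat -> RR) :
  (forall j n, `|v j n| <= 1) ->
  exists f : nat -> nat, increasing_seq f /\ forall j, j \in l -> cvgn (v j \o f).
Proof.
move=> hb; elim: l => [|j l [f [hf IH]]].
  by exists id; split => // j; rewrite in_nil.
have bnd : bounded_fun (v j \o f).
  exists 1; split; first by rewrite num_real.
  move=> M hM x _; apply: le_trans (hb j (f x)) (ltW hM).
have [g hg cg] := bolzano_weierstrass bnd.
exists (f \o g); split.
  by move=> a b /=; rewrite hf; exact: hg.
move=> k; rewrite in_cons => /orP[/eqP -> //|kl].
have [lk hk] := (cvg_ex _).1 (IH k kl).
apply/cvg_ex; exists lk; exact: (cvg_subseqR hg hk).
Qed.
Lemma ccvg_bw (T : finType) (u : nat -> T -> CC) :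
  (forall n a, `|Rp (u n a)| <= 1 /\ `|Ip (u n a)| <= 1) ->
  exists f : nat -> nat, increasing_seq f /\
    exists c : T -> CC, forall a, ccvg (fun n => u (f n) a) (c a).
Proof.
move=> hb.
pose v (jb : (T * bool)%type) n := if jb.2 then Rp (u n jb.1) else Ip (u n jb.1).
have hv : forall j n, `|v j n| <= 1.
  by move=> [a []] n; rewrite /v /=; case: (hb n a).
have [f [hf cf]] := bw_fam (enum [set: T * bool]) hv.
exists f; split => //.
exists (fun a => complex.Complex (limn (v (a, true) \o f)) (limn (v (a, false) \o f))).
move=> a; split => /=.
  by have := cf (a, true) ltac:(by rewrite mem_enum inE).
by have := cf (a, false) ltac:(by rewrite mem_enum inE).
Qed.
Lemma Rp_sum (I : Type) (r : seq I) (F : I -> CC) :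
  Rp (\sum_(i <- r) F i) = \sum_(i <- r) Rp (F i).
Proof. by elim: r => [|i r IH]; rewrite ?big_nil // !big_cons ReD IH. Qed.

Lemma Rp_normsq (x : CC) : Rp (x * x^*) = Rp x ^+ 2 + Ip x ^+ 2.
Proof. by rewrite conjCE; case: x => a b /=; rewrite !expr2; ring. Qed.

Definition mxcvg m n (A : nat -> 'M[CC]_(m,n)) (L : 'M[CC]_(m,n)) :=
  forall i j, ccvg (fun k => A k i j) (L i j).

Lemma mxcvg_cst m n (L : 'M[CC]_(m,n)) : mxcvg (fun _ => L) L.
Proof. by move=> i j; exact: ccvg_cst. Qed.

Lemma mxcvgD m n (A B : nat -> 'M[CC]_(m,n)) LA LB :
  mxcvg A LA -> mxcvg B LB -> mxcvg (fun k => A k + B k) (LA + LB).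
Proof.
move=> hA hB i j; rewrite mxE.
have -> : (fun k => (A k + B k) i j) = (fun k => A k i j + B k i j).
  by apply: funext => k; rewrite mxE.
exact: ccvgD.
Qed.

Lemma mxcvgM m n p (A : nat -> 'M[CC]_(m,n)) (B : nat -> 'M[CC]_(n,p)) LA LB :
  mxcvg A LA -> mxcvg B LB -> mxcvg (fun k => A k *m B k) (LA *m LB).
Proof.
move=> hA hB i j; rewrite mxE.
have -> : (fun k => (A k *m B k) i j) = (fun k => \sum_l A k i l * B k l j).
  by apply: funext => k; rewrite mxE.
by apply: ccvg_sum => l; exact: ccvgM.
Qed.

Lemma mxcvg_trC m n (A : nat -> 'M[CC]_(m,n)) LA :
  mxcvg A LA -> mxcvg (fun k => map_mx Num.conj_op (A k)^T) (map_mx Num.conj_op LA^T).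
Proof.
move=> hA i j; rewrite !mxE.
have -> : (fun k => (map_mx Num.conj_op (A k)^T) i j) = (fun k => (A k j i)^*).
  by apply: funext => k; rewrite !mxE.
exact: ccvg_conj.
Qed.

Lemma mxcvg_unique m n (A : nat -> 'M[CC]_(m,n)) L1 L2 :
  mxcvg A L1 -> mxcvg A L2 -> L1 = L2.
Proof. by move=> h1 h2; apply/matrixP => i j; exact: ccvg_unique (h1 i j) (h2 i j). Qed.

Lemma mxcvg_eq m n (A B : nat -> 'M[CC]_(m,n)) L1 L2 :
  (forall k, A k = B k) -> mxcvg A L1 -> mxcvg B L2 -> L1 = L2.
Proof.
move=> e h1 h2; have eAB : A = B by apply: funext.
by rewrite eAB in h1; exact: mxcvg_unique h1 h2.
Qed.

Lemma mxcvg_line m n (Y Z : 'M[CC]_(m,n)) (t : nat -> RR) :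
  t @ \oo --> 0 -> mxcvg (fun k => Y + (complex.Complex (t k) 0) *: Z) Y.
Proof.
move=> t0; rewrite -[X in mxcvg _ X]addr0; apply: mxcvgD; first exact: mxcvg_cst.
move=> i j; rewrite mxE.
have -> : (fun k => ((complex.Complex (t k) 0) *: Z) i j) = (fun k => complex.Complex (t k) 0 * Z i j).
  by apply: funext => k; rewrite mxE.
rewrite -(mul0r (Z i j)); apply: ccvgM; last exact: ccvg_cst.
by split => //=; exact: cvg_cst.
Qed.

End Gen.


Section Closed.
Variables (I Omega : finType) (src tgt : Omega -> I).
Definition RT : realType := Rdefinitions.R.
Local Notation RR := Rdefinitions.R.
Local Notation Rp := (@complex.Re RR).
Local Notation Ip := (@complex.Im RR).

Definition rc (t : RR) : CC := complex.Complex t 0.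
Definition rline (beta : I -> nat) (y z : rep src tgt beta) (t : CC) : rep src tgt beta :=
  fun h => y h + t *: z h.
Definition has_sub beta (gam : I -> nat) (y : rep src tgt beta) :=
  exists U : forall i, 'M[CC]_(beta i), is_subrep y U /\ forall i, \rank (U i) = gam i.

Lemma orthobasis n r (U : 'M[CC]_n) : \rank U = r ->
  exists M : 'M[CC]_(r, n), M \is unitarymx /\ (M :=: U)%MS.
Proof.
move=> <-; exists (schmidt (row_base U)); split.
  by apply: schmidt_unitarymx; rewrite rank_leq_col.
exact: eqmx_trans (eqmx_schmidt_free (row_base_free U)) (eq_row_base U).
Qed.

Lemma unit_bound m n (M : 'M[CC]_(m, n)) : M \is unitarymx ->
  forall a b, `|Rp (M a b)| <= 1 /\ `|Ip (M a b)| <= 1.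
Proof.
move=> /unitarymxP hM a b.
have e : \sum_l (Rp (M a l) ^+ 2 + Ip (M a l) ^+ 2) = 1.
  have := congr1 (fun X : 'M[CC]_m => Rp (X a a)) hM.
  rewrite !mxE eqxx /= Rp_sum => <-.
  by apply: eq_bigr => l _; rewrite !mxE Rp_normsq.
have hle : Rp (M a b) ^+ 2 + Ip (M a b) ^+ 2 <= 1.
  rewrite -e (bigD1 b) //= lerDl; apply: sumr_ge0 => l _.
  by apply: addr_ge0; apply: sqr_ge0.
have h1 : `|Rp (M a b)| ^+ 2 <= 1.
  rewrite real_normK ?num_real //; apply: le_trans hle; rewrite lerDl sqr_ge0 //.
have h2 : `|Ip (M a b)| ^+ 2 <= 1.
  rewrite real_normK ?num_real //; apply: le_trans hle; rewrite lerDr sqr_ge0 //.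
by move: h1 h2; rewrite !expr_le1.
Qed.

Lemma proj_eq m n p (A : 'M[CC]_(m, n)) (M : 'M[CC]_(p, n)) :
  M \is unitarymx -> (A <= M)%MS -> A *m (M^t* *m M) = A.
Proof.
move=> /unitarymxP hM /submxP [W ->].
by rewrite -!mulmxA [M *m (_ *m _)]mulmxA hM mul1mx.
Qed.

Lemma has_sub_closed beta gam (y0 z : rep src tgt beta) (t : nat -> RT) :
  t @ \oo --> 0 -> (forall k, has_sub gam (rline y0 z (rc (t k)))) ->
  has_sub gam y0.
Proof.
move=> t0 hk.
have hM : forall k, exists M : forall i, 'M[CC]_(gam i, beta i),
    (forall i, M i \is unitarymx) /\
    forall h, (M (src h) *m (rline y0 z (rc (t k)) h) <= M (tgt h))%MS.
  move=> k; have [U [hU hr]] := hk k.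
  have hb : forall i, exists Mi : 'M[CC]_(gam i, beta i), Mi \is unitarymx /\ (Mi :=: U i)%MS.
    by move=> i; exact: orthobasis.
  exists (fun i => sval (cid (hb i))); split => [i|h].
    by case: (cid (hb i)) => /= Mi [].
  case: (cid (hb (src h))) => /= Ms [_ es]; case: (cid (hb (tgt h))) => /= Mt [_ et].
  by rewrite (eqmxMr _ es) et; exact: hU.
have [M hMk] := choice hM.
pose T := {i : I & ('I_(gam i) * 'I_(beta i))%type}.
pose u k (a : T) := M k (tag a) (tagged a).1 (tagged a).2.
have hb : forall k a, `|Rp (u k a)| <= 1 /\ `|Ip (u k a)| <= 1.
  by move=> k a; apply: unit_bound; case: (hMk k) => ->.
have [f [hf [c hc]]] := ccvg_bw hb.
pose L i := \matrix_(a, b) c (@existT I (fun i => ('I_(gam i) * 'I_(beta i))%type) i (a, b)).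
have hL : forall i, mxcvg (fun k => M (f k) i) (L i).
  by move=> i a b; rewrite mxE; exact: (hc (@existT I (fun i => ('I_(gam i) * 'I_(beta i))%type) i (a, b))).
have tf0 : (t \o f) @ \oo --> 0 by exact: cvg_subseqR.
have hY : forall h, mxcvg (fun k => rline y0 z (rc (t (f k))) h) (y0 h).
  by move=> h; exact: (mxcvg_line (y0 h) (z h) tf0).
have hLu : forall i, L i \is unitarymx.
  move=> i; apply/unitarymxP.
  apply: (@mxcvg_eq _ _ _ (fun k => M (f k) i *m (M (f k) i)^t*) (fun _ => 1%:M)).
  - by move=> k; apply/unitarymxP; case: (hMk (f k)) => ->.
  - by apply: mxcvgM (hL i) _; exact: mxcvg_trC.
  - exact: mxcvg_cst.
have hLs : forall h, L (src h) *m y0 h *m ((L (tgt h))^t* *m L (tgt h)) = L (src h) *m y0 h.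
  move=> h.
  apply: (@mxcvg_eq _ _ _ (fun k => M (f k) (src h) *m rline y0 z (rc (t (f k))) h *m ((M (f k) (tgt h))^t* *m M (f k) (tgt h)))
                        (fun k => M (f k) (src h) *m rline y0 z (rc (t (f k))) h)).
  - move=> k; case: (hMk (f k)) => hu hs; exact: proj_eq.
  - apply: mxcvgM; first exact: mxcvgM.
    by apply: mxcvgM => //; exact: mxcvg_trC.
  - exact: mxcvgM.
exists (fun i => <<L i>>%MS); split.
  move=> h; rewrite (eqmxMr _ (genmxE _)) genmxE -hLs mulmxA; exact: submxMl.
by move=> i; rewrite genmxE; exact: mxrank_unitary.
Qed.

Lemma fin_min (G : finType) (e : G -> RT) : (forall g, 0 < e g) ->
  exists eps : RT, 0 < eps /\ forall g, eps <= e g.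
Proof.
move=> he.
suff : forall l : seq G, exists eps : RT, 0 < eps /\ forall g, g \in l -> eps <= e g.
  by case/(_ (enum G)) => eps [h1 h2]; exists eps; split => // g; apply: h2; rewrite mem_enum.
elim=> [|g l [eps [h1 h2]]]; first by exists 1.
exists (Num.min eps (e g)); split; first by rewrite lt_min h1 he.
move=> g'; rewrite in_cons => /orP[/eqP ->|hg]; rewrite ge_min ?lexx ?orbT //.
by rewrite h2.
Qed.

Lemma seq_to0 (P : RT -> Prop) :
  (forall k, exists t : RT, 0 < t < harmonic k /\ P t) ->
  exists t : nat -> RT, t @ \oo --> 0 /\ forall k, P (t k).
Proof.
move=> h; have [t ht] := choice h; exists t; split; last by move=> k; case: (ht k).
apply: (@squeeze_cvgr _ _ _ _ (fun _ => 0) (fun k => harmonic k)).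
- by near=> k; case: (ht k) => /andP[/ltW -> /ltW ->].
- exact: cvg_cst.
- exact: cvg_harmonic.
Unshelve. all: by end_near.
Qed.

Lemma ss_open theta beta (y0 z : rep src tgt beta) : semistable theta y0 ->
  exists eps : RT, 0 < eps /\
    forall t : RT, 0 < t < eps -> semistable theta (rline y0 z (rc t)).
Proof.
move=> ss0.
pose N := (\sum_i beta i).+1.
pose gm (g : {ffun I -> 'I_N}) i := nat_of_ord (g i).
pose bad g := slope theta beta < slope theta (gm g) /\ exists i, gm g i != 0%N.
have hg : forall g, exists e : RT, 0 < e /\ forall t : RT, 0 < t < e ->
    has_sub (gm g) (rline y0 z (rc t)) -> ~ bad g.
  move=> g; have [bg|nbg] := pselect (bad g); last first.
    by exists 1; split => // t _ _.
  have n0 : ~ has_sub (gm g) y0.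
    move=> [U [hU hr]]; case: bg => hlt [i hi].
    have hUi : exists i, U i != 0 by exists i; rewrite -mxrank_eq0 hr.
    have := ss0 U hU hUi.
    have -> : (fun i => \rank (U i)) = gm g by apply: funext => j; rewrite hr.
    by rewrite leNgt hlt.
  have [//|nh] := pselect (exists e : RT, 0 < e /\ forall t : RT, 0 < t < e ->
    has_sub (gm g) (rline y0 z (rc t)) -> ~ bad g).
  have hk : forall k, exists t : RT, 0 < t < harmonic k /\ has_sub (gm g) (rline y0 z (rc t)).
    move=> k; apply: contrapT => hn; apply: nh; exists (harmonic k); split.
      exact: harmonic_gt0.
    by move=> t ht hs _; apply: hn; exists t.
  have [t [t0 ht]] := seq_to0 hk.
  by case: n0; exact: (has_sub_closed t0 ht).
have [e he] := choice hg.
have [eps [eps0 epsle]] := fin_min (fun g => proj1 (he g)).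
exists eps; split => // t /andP[t0 teps] U hU [i hi].
pose g : {ffun I -> 'I_N} := [ffun j => inord (\rank (U j))].
have hgm : gm g = fun j => \rank (U j).
  apply: funext => j; rewrite /gm /g ffunE inordK // ltnS.
  apply: leq_trans (rank_leq_row _) _.
  by rewrite (bigD1 j) //= leq_addr.
have hs : has_sub (gm g) (rline y0 z (rc t)) by exists U; split => // j; rewrite hgm.
have tl : 0 < t < e g by rewrite t0 /=; exact: lt_le_trans teps (epsle g).
have := (proj2 (he g)) t tl hs; rewrite /bad hgm => hb.
rewrite leNgt; apply/negP => hlt; apply: hb; split => //.
by exists i; rewrite mxrank_eq0.
Qed.

End Closed.

Section Main.
Variables (I Omega : finType) (src tgt : Omega -> I).
Local Notation RR := Rdefinitions.R.

Definition rsub beta (x x0 : rep src tgt beta) : rep src tgt beta := fun h => x h - x0 h.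

Lemma subB_sub m1 m2 n (A B : 'M[CC]_(m1, n)) (C : 'M[CC]_(m2, n)) :
  (A <= C)%MS -> (B <= C)%MS -> (A - B <= C)%MS.
Proof. by move=> hA hB; rewrite -scaleN1r; apply: addmx_sub => //; exact: scalemx_sub. Qed.

Lemma rep_flag_line alpha s (F : nat -> forall i : I, 'M[CC]_(alpha i)) (x0 x : rep src tgt alpha) c :
  rep_flag s F x0 -> rep_flag s F x -> rep_flag s F (rline x0 (rsub x x0) c).
Proof.
move=> h0 h1 k h hk; rewrite /rline /rsub mulmxDr -scalemxAr mulmxBr.
apply: addmx_sub; first exact: h0.
by apply: scalemx_sub; apply: subB_sub; [exact: h1 | exact: h0].
Qed.

Lemma induced_exists alpha s (d : nat -> I -> nat) (F : nat -> forall i : I, 'M[CC]_(alpha i))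
  (B : forall (k : nat) (i : I), 'M[CC]_(d k i, alpha i)) (x : rep src tgt alpha) k :
  is_quot_basis s F B -> rep_flag s F x -> (k < s)%N ->
  exists y : rep src tgt (d k), induced F B x y.
Proof.
move=> hB hx ks.
have hh : forall h, exists Y : 'M[CC]_(d k (src h), d k (tgt h)),
    (B k (src h) *m x h - Y *m B k (tgt h) <= F k (tgt h))%MS.
  move=> h.
  have : (B k (src h) *m x h <= F k (tgt h) + B k (tgt h))%MS.
    apply: submx_trans (proj2 (hB k (tgt h) ks)).
    apply: submx_trans (hx k.+1 h ks).
    exact: submxMr (proj1 (hB k (src h) ks)).
  case/sub_addsmxP => [[u1 u2]] /= e.
  exists u2; rewrite e addrK; exact: submxMl.
exists (fun h => sval (cid (hh h))) => h; exact: (svalP (cid (hh h))).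
Qed.

Lemma lin_id (K : pzRingType) (V : lmodType K) (a b a' b' : V) (c : K) :
  a + c *: (a' - a) - (b + c *: (b' - b)) = a - b + c *: (a' - b' - (a - b)).
Proof.
rewrite opprD addrACA -scalerBr; congr (_ + _ *: _).
by rewrite !opprD !opprK addrACA.
Qed.

Lemma induced_line alpha (d : nat -> I -> nat) (F : nat -> forall i : I, 'M[CC]_(alpha i))
  (B : forall (k : nat) (i : I), 'M[CC]_(d k i, alpha i)) (x0 x : rep src tgt alpha) k
  (y0 y1 : rep src tgt (d k)) c :
  induced F B x0 y0 -> induced F B x y1 ->
  induced F B (rline x0 (rsub x x0) c) (rline y0 (rsub y1 y0) c).
Proof.
move=> h0 h1 h; rewrite /rline /rsub.
set P := B k (src h) *m x0 h - y0 h *m B k (tgt h).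
set Q := B k (src h) *m x h - y1 h *m B k (tgt h).
have -> : B k (src h) *m (x0 h + c *: (x h - x0 h)) -
    (y0 h + c *: (y1 h - y0 h)) *m B k (tgt h) = P + c *: (Q - P).
  by rewrite /P /Q mulmxDr mulmxDl -scalemxAr -scalemxAl mulmxBr mulmxBl lin_id.
apply: addmx_sub; first exact: h0.
by apply: scalemx_sub; apply: subB_sub; [exact: h1 | exact: h0].
Qed.

Lemma poly_line n (p : {mpoly CC[n]}) (a b : 'I_n -> CC) :
  exists q : {poly CC}, forall c, q.[c] = p.@[fun v => a v + c * b v].
Proof.
exists (\sum_(m <- msupp p) (p@_m)%:P * \prod_i ((a i)%:P + 'X * (b i)%:P) ^+ (m i)).
move=> c; rewrite mevalE horner_sum; apply: eq_bigr => m _.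
rewrite hornerM hornerC horner_prod; congr (_ * _); apply: eq_bigr => i _.
by rewrite horner_exp hornerD hornerC hornerM hornerX hornerC.
Qed.

Lemma poly_zero_interval (q : {poly CC}) (eps : RT) : 0 < eps ->
  (forall t : RT, 0 < t < eps -> q.[rc t] = 0) -> q = 0.
Proof.
move=> e0 hq; apply/eqP; apply: contraT => qn0.
pose rs := [seq rc (eps / (j.+2)%:R) | j <- iota 0 (size q)].
have := @max_poly_roots _ q rs qn0.
rewrite size_map size_iota ltnn; apply.
- apply/allP => _ /mapP [j _ ->]; rewrite /root hq //.
  rewrite divr_gt0 ?ltr0Sn //= ltr_pdivrMr ?ltr0Sn // ltr_pMr // ltr1n //.
- rewrite map_inj_uniq ?iota_uniq // => i j [] /(mulfI (lt0r_neq0 e0)) /invr_inj /eqP.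
  by rewrite eqr_nat => /eqP [].
Qed.

Lemma density theta alpha s (d : nat -> I -> nat) (F : nat -> forall i : I, 'M[CC]_(alpha i))
  (B : forall (k : nat) (i : I), 'M[CC]_(d k i, alpha i)) :
  is_quot_basis s F B ->
  forall x0 : rep src tgt alpha, @rep_flag_ss I Omega src tgt theta alpha s d F B x0 ->
  forall p : {mpoly CC[ncoord src tgt alpha]},
  (forall x, @rep_flag_ss I Omega src tgt theta alpha s d F B x -> p.@[coords x] = 0) ->
  forall x, @rep_flag I Omega src tgt alpha s F x -> p.@[coords x] = 0.
Proof.
move=> hB x0 [hf0 hss0] p hp x hx.
have hk : forall k : 'I_s, exists e : RT, 0 < e /\ forall t : RT, 0 < t < e ->
    exists y : rep src tgt (d k), induced F B (rline x0 (rsub x x0) (rc t)) y /\ semistable theta y.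
  move=> k; have [y0 [i0 ss0]] := hss0 k (ltn_ord k).
  have [y1 i1] := induced_exists hB hx (ltn_ord k).
  have [e [e0 he]] := ss_open (rsub y1 y0) ss0.
  exists e; split => // t ht; exists (rline y0 (rsub y1 y0) (rc t)); split.
    exact: induced_line.
  exact: he.
have [e he] := choice hk.
have [eps [eps0 epsle]] := fin_min (fun k => proj1 (he k)).
have [q hq] := poly_line p (coords x0) (fun v => coords x v - coords x0 v).
have hcoords : forall c, coords (rline x0 (rsub x x0) c) =
    (fun v => coords x0 v + c * (coords x v - coords x0 v)).
  by move=> c; apply: funext => v; rewrite /coords /rline /rsub !mxE.
have q0 : q = 0.
  apply: (poly_zero_interval eps0) => t /andP[t0 te].
  rewrite hq -hcoords; apply: hp; split; first exact: rep_flag_line.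
  move=> k ks; apply: (proj2 (he (Ordinal ks))).
  by rewrite t0 /=; exact: lt_le_trans te (epsle _).
have := hq 1; rewrite q0 horner0.
have -> : (fun v => coords x0 v + 1 * (coords x v - coords x0 v)) = coords x.
  by apply: funext => v; rewrite mul1r addrC subrK.
by move=> <-.
Qed.

End Main.

Theorem lemma4p5
  (I Omega : finType) (src tgt : Omega -> I)
  (theta : I -> int) (alpha : I -> nat)
  (s : nat) (d : nat -> I -> nat)
  (hd_nz : forall k, (k < s)%N -> exists i, d k i != 0%N)
  (hd_sum : forall i, (\sum_(k < s) d k i)%N = alpha i)
  (F : nat -> forall i : I, 'M[CC]_(alpha i))
  (hF : @is_flag I alpha s d F)
  (B : forall (k : nat) (i : I), 'M[CC]_(d k i, alpha i))
  (hB : @is_quot_basis I alpha s d F B)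
  (hne : exists x : rep src tgt alpha,
           @rep_flag_ss I Omega src tgt theta alpha s d F B x) :
  forall n : nat,
    @is_dim I Omega src tgt alpha (@rep_flag I Omega src tgt alpha s F) n <->
    @is_dim I Omega src tgt alpha (@rep_flag_ss I Omega src tgt theta alpha s d F B) n.
Proof.
move=> n.
have [x0 hx0] := hne.
have eqI : forall J, @alg_indep I Omega src tgt alpha (@rep_flag I Omega src tgt alpha s F) J <->
                     @alg_indep I Omega src tgt alpha (@rep_flag_ss I Omega src tgt theta alpha s d F B) J.
  move=> J; split => hI p hm hv; apply: hI hm _.
    by move=> x hx; exact: (density hB hx0 hv hx).
  by move=> x [hx _]; exact: hv.
rewrite /is_dim; split => [[[J [hJ hc]] hmax]|[[J [hJ hc]] hmax]]; split.
- by exists J; split => //; apply/eqI.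
- by move=> J' /eqI; exact: hmax.
- by exists J; split => //; apply/eqI.
- by move=> J' /eqI; exact: hmax.
Qed.
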